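(* Let $G$ be a finite simple graph on $n$ vertices. Then there exists a finite simple graph $\widehat{G}$ such that \[ h(G,x)=x^{n}\,I(\widehat{G},1/x). \]
   Context: For a graph $G$ on $n$ vertices, let $a_k(G)$ denote the number of ways to cover all vertices of $G$ by exactly $k$ pairwise disjoint cliques of $G$ (i.e. the number of partitions of $V(G)$ into exactly $k$ parts, each inducing a complete subgraph). The adjoint polynomial of $G$ is $h(G,x)=\sum_{k=1}^n(-1)^{n-k}a_k(G)x^k$. For a graph $H$, the independence polynomial is $I(H,x)=\sum_{k\ge 0}(-1)^k i_k(H)x^k$, where $i_k(H)$ is the number of independent sets of size $k$ in $H$ (so $i_0(H)=1$). *)

(* Defs.v *)
From HB Require Import structures.
From mathcomp Require Import all_boot all_order all_algebra.
Set Implicit Arguments. Unset Strict Implicit. Unset Printing Implicit Defensive.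
Import GRing.Theory Num.Theory.
Local Open Scope ring_scope.

Definition simple_graph (T : finType) (e : rel T) : Prop :=
  symmetric e /\ irreflexive e.

Definition is_clique (T : finType) (e : rel T) (A : {set T}) : bool :=
  [forall x in A, forall y in A, (x != y) ==> e x y].

Definition clique_cover_num (T : finType) (e : rel T) (k : nat) : nat :=
  #|[set P : {set {set T}} | [&& partition P [set: T],
                                 [forall A in P, is_clique e A] & #|P| == k]]|.

Definition is_indep (T : finType) (e : rel T) (A : {set T}) : bool :=
  [forall x in A, forall y in A, ~~ e x y].

Definition indep_num (T : finType) (e : rel T) (k : nat) : nat :=
  #|[set A : {set T} | is_indep e A && (#|A| == k)]|.

Definition adjoint_poly (T : finType) (e : rel T) : {poly rat} :=
  \sum_(1 <= k < #|T|.+1)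
     ((-1) ^+ (#|T| - k) * (clique_cover_num e k)%:R) *: 'X^k.

Definition indep_poly (T : finType) (e : rel T) : {poly rat} :=
  \sum_(0 <= k < #|T|.+1) ((-1) ^+ k * (indep_num e k)%:R) *: 'X^k.

(* Main.v *)
Require Import Defs.
From HB Require Import structures.
From mathcomp Require Import all_boot all_order all_algebra.
From mathcomp Require Import zify.
Import GRing.Theory Num.Theory.
Set Implicit Arguments. Unset Strict Implicit. Unset Printing Implicit Defensive.

Section Comb.
Variables (T : finType) (e : rel T).
Hypothesis e_sym : symmetric e.
Hypothesis e_irr : irreflexive e.

Definition rk (x : T) : nat := enum_rank x.
Lemma rk_inj : injective rk.
Proof. by move=> x y /val_inj /enum_rank_inj. Qed.

Definition inR (f : {ffun T -> T}) : bool :=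
  [&& [forall v, f (f v) == f v], [forall v, rk (f v) <= rk v] &
      [forall v, forall w, (v != w) && (f v == f w) ==> e v w]].

Lemma inR_idem f v : inR f -> f (f v) = f v.
Proof. by case/and3P => /forallP/(_ v)/eqP. Qed.
Lemma inR_rk f v : inR f -> rk (f v) <= rk v.
Proof. by case/and3P => _ /forallP/(_ v). Qed.
Lemma inR_cl f v w : inR f -> v != w -> f v = f w -> e v w.
Proof.
case/and3P => _ _ /forallP/(_ v)/forallP/(_ w)/implyP H vw fvw; apply: H.
by rewrite vw fvw eqxx.
Qed.
Lemma inRI (f : {ffun T -> T}) : (forall v, f (f v) = f v) -> (forall v, rk (f v) <= rk v) ->
  (forall v w, v != w -> f v = f w -> e v w) -> inR f.
Proof.
move=> H1 H2 H3; apply/and3P; split; apply/forallP => v.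
- by rewrite H1.
- by [].
apply/forallP => w; apply/implyP => /andP[vw /eqP fvw]; exact: H3.
Qed.
Lemma rk_lt f v : inR f -> f v != v -> rk (f v) < rk v.
Proof.
move=> Rf nv; rewrite ltn_neqAle inR_rk // andbT.
by apply: contra nv => /eqP/rk_inj ->.
Qed.
Lemma inR_edge f v : inR f -> f v != v -> e (f v) v.
Proof. by move=> Rf nv; apply: (inR_cl Rf nv); exact: inR_idem. Qed.

Definition cliquepart (P : {set {set T}}) :=
  partition P [set: T] && [forall A in P, is_clique e A].

Definition toP (f : {ffun T -> T}) := preim_partition f [set: T].

Lemma pblock_toP f v y : (y \in pblock (toP f) v) = (f v == f y).
Proof.
have eqiR : {in [set: T] & &, equivalence_rel (fun x y => f x == f y)}.
  by move=> x z w _ _ _; split=> // /eqP->.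
exact: (pblock_equivalence_partition eqiR (in_setT v) (in_setT y)).
Qed.

Lemma toP_clique f : inR f -> cliquepart (toP f).
Proof.
move=> Rf; apply/andP; split; first exact: preim_partitionP.
apply/forallP => A; apply/implyP => /imsetP[x _ ->].
apply/forallP => y; apply/implyP; rewrite inE => /andP[_ /eqP fy].
apply/forallP => z; apply/implyP; rewrite inE => /andP[_ /eqP fz].
by apply/implyP => yz; apply: (inR_cl Rf yz); rewrite -fy -fz.
Qed.

Lemma card_toP f : inR f -> #|toP f| = #|f @: [set: T]|.
Proof.
move=> Rf.
have -> : toP f = (fun r => [set y in [set: T] | r == f y]) @: (f @: [set: T]).
  by rewrite -imset_comp.
apply: card_in_imset => _ _ /imsetP[x1 _ ->] /imsetP[x2 _ ->] /setP/(_ (f x1)).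
by rewrite !inE inR_idem // eqxx => /esym/eqP.
Qed.

Definition fP (P : {set {set T}}) v := arg_min v (fun x => x \in pblock P v) rk.

Lemma fP_spec P v : partition P [set: T] ->
  fP P v \in pblock P v /\ forall y, y \in pblock P v -> rk (fP P v) <= rk y.
Proof.
move=> pP; have Pv : v \in pblock P v by rewrite mem_pblock (cover_partition pP) inE.
rewrite /fP; case: (arg_minnP rk Pv) => i Pi Hi; split => //.
Qed.


Lemma min_uniq (B : {set T}) r1 r2 : r1 \in B -> r2 \in B ->
  (forall y, y \in B -> rk r1 <= rk y) -> (forall y, y \in B -> rk r2 <= rk y) ->
  r1 = r2.
Proof.
move=> B1 B2 H1 H2; apply: rk_inj; apply/eqP; rewrite eqn_leq.
by rewrite H1 // H2.
Qed.

Section FP.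
Variable P : {set {set T}}.
Hypothesis cP : cliquepart P.
Let pP : partition P [set: T]. Proof. by case/andP: cP. Qed.
Let tiP : trivIset P. Proof. exact: partition_trivIset pP. Qed.
Let memP v : v \in pblock P v.
Proof. by rewrite mem_pblock (cover_partition pP) inE. Qed.

Lemma fP_block v : pblock P (fP P v) = pblock P v.
Proof. by apply: same_pblock => //; case: (fP_spec v pP). Qed.

Lemma fP_eq x y : (fP P x == fP P y) = (pblock P x == pblock P y).
Proof.
apply/eqP/eqP => [H | H]; first by rewrite -fP_block H fP_block.
case: (fP_spec x pP) => Hx1 Hx2; case: (fP_spec y pP) => Hy1 Hy2.
by apply: (min_uniq (B := pblock P y)) => //; rewrite -H.
Qed.

Definition fPf := [ffun v => fP P v].

Lemma fPf_R : inR fPf.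
Proof.
apply: inRI => [v | v | v w vw]; rewrite !ffunE.
- by apply/eqP; rewrite fP_eq fP_block.
- by case: (fP_spec v pP) => _ ->.
move/eqP; rewrite fP_eq => /eqP H.
have PB : pblock P v \in P by rewrite pblock_mem // (cover_partition pP) inE.
case/andP: cP => _ /forallP/(_ (pblock P v))/implyP/(_ PB) cl.
move/forallP: cl => /(_ v)/implyP/(_ (memP v))/forallP/(_ w)/implyP.
by rewrite H => /(_ (memP w))/implyP/(_ vw).
Qed.

Lemma preim_eq (T1 T2 : eqType) (f : T -> T1) (g : T -> T2) (D : {set T}) :
  (forall x y, (f x == f y) = (g x == g y)) ->
  preim_partition f D = preim_partition g D.
Proof.
move=> H; rewrite /preim_partition /equivalence_partition.
by apply: eq_imset => x; apply/setP => y; rewrite !inE H.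
Qed.

Lemma toP_fPf : toP fPf = P.
Proof.
rewrite /toP -[RHS](preim_partition_pblock pP); apply: preim_eq => x y.
by rewrite !ffunE fP_eq.
Qed.
End FP.

Lemma toP_inj f g : inR f -> inR g -> toP f = toP g -> f = g.
Proof.
move=> Rf Rg H; apply/ffunP => v.
apply: (min_uniq (B := pblock (toP f) v)).
- by rewrite pblock_toP inR_idem.
- by rewrite H pblock_toP inR_idem.
- by move=> y; rewrite pblock_toP => /eqP->; apply: inR_rk.
- by move=> y; rewrite H pblock_toP => /eqP->; apply: inR_rk.
Qed.

Lemma a_R k : clique_cover_num e k = #|[set f | inR f && (#|f @: [set: T]| == k)]|.
Proof.
rewrite /clique_cover_num -(card_in_imset (f := toP)); last first.
  by move=> f g; rewrite !inE => /andP[Rf _] /andP[Rg _]; apply: toP_inj.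
apply: eq_card => P; rewrite [in LHS]inE; apply/idP/idP.
- case/and3P => pP fa /eqP cP.
  have cl : cliquepart P by apply/andP.
  apply/imsetP; exists (fPf P); last by rewrite toP_fPf.
  by rewrite inE fPf_R //= -card_toP ?fPf_R // toP_fPf // cP.
- case/imsetP => f; rewrite inE => /andP[Rf /eqP ck] ->.
  case/andP: (toP_clique Rf) => -> -> /=.
  by rewrite card_toP // ck.
Qed.


Definition U := {p : T * T | e p.1 p.2 && (rk p.1 < rk p.2)}.

Definition conf : rel U := fun a b =>
  (a != b) && [|| (val a).2 == (val b).2, (val a).2 == (val b).1,
                  (val a).1 == (val b).2 | ((val a).1 == (val b).1) && ~~ e (val a).2 (val b).2].

Lemma conf_sym : symmetric conf.
Proof.
move=> a b; rewrite /conf eq_sym; congr (_ && _).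
rewrite (eq_sym (val a).2) (eq_sym (val a).1) (eq_sym (val a).2 (val b).1).
rewrite (eq_sym (val a).1 (val b).1) e_sym.
by case: ((val b).2 == (val a).2); case: ((val b).2 == (val a).1); case: ((val b).1 == (val a).2).
Qed.

Lemma conf_irr : irreflexive conf.
Proof. by move=> a; rewrite /conf eqxx. Qed.

Lemma indepP (S : {set U}) a b : is_indep conf S -> a \in S -> b \in S -> ~~ conf a b.
Proof.
by move/forallP/(_ a)/implyP => H aS; move/forallP: (H aS) => /(_ b)/implyP.
Qed.

Lemma U_lt (a : U) : rk (val a).1 < rk (val a).2.
Proof. by case/andP: (valP a). Qed.
Lemma U_e (a : U) : e (val a).1 (val a).2.
Proof. by case/andP: (valP a). Qed.
Lemma U_neq (a : U) : (val a).1 != (val a).2.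
Proof. by apply/eqP => H; move: (U_lt a); rewrite H ltnn. Qed.

Lemma U_eq (a b : U) : (val a).1 = (val b).1 -> (val a).2 = (val b).2 -> a = b.
Proof.
move=> H1 H2; apply: val_inj.
by rewrite [val a]surjective_pairing [val b]surjective_pairing H1 H2.
Qed.

Definition sigma (f : {ffun T -> T}) := [set a : U | f (val a).2 == (val a).1].

Lemma sigma_indep f : inR f -> is_indep conf (sigma f).
Proof.
move=> Rf; apply/forallP => a; apply/implyP; rewrite inE => /eqP fa.
apply/forallP => b; apply/implyP; rewrite inE => /eqP fb.
apply/negP => /andP[nab H].
case/or4P: H => [/eqP H | /eqP H | /eqP H | /andP[/eqP H ne]].
- by move/eqP: nab; apply; apply: U_eq => //; rewrite -fa -fb H.
- have := inR_idem (val b).2 Rf; rewrite fb -H fa => H'.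
  by move: (U_neq a); rewrite H' eqxx.
- have := inR_idem (val a).2 Rf; rewrite fa H fb => H'.
  by move: (U_neq b); rewrite H' eqxx.
- have nw : (val a).2 != (val b).2.
    by apply: contra nab => /eqP H2; apply/eqP; apply: U_eq.
  by move: ne; rewrite (inR_cl Rf nw) // fa fb H.
Qed.

Lemma card_sigma f : inR f -> #|sigma f| + #|f @: [set: T]| = #|T|.
Proof.
move=> Rf.
have -> : f @: [set: T] = ~: [set v | f v != v].
  apply/setP => v; rewrite !inE negbK; apply/imsetP/eqP => [[x _ ->] | H].
    exact: inR_idem.
  by exists v.
rewrite -[X in X + _ = _]/(#|[set a : U | f (val a).2 == (val a).1]|).
rewrite -(card_in_imset (f := fun a : U => (val a).2)); first (suff -> : (fun a : U => (val a).2) @: [set a : U | f (val a).2 == (val a).1] = [set v | f v != v] by rewrite cardsC).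
  apply/setP => v; rewrite inE; apply/imsetP/idP => [[a] | H].
    by rewrite inE => /eqP fa ->; rewrite fa U_neq.
  have Hv : e (f v, v).1 (f v, v).2 && (rk (f v, v).1 < rk (f v, v).2).
    by rewrite /= inR_edge // rk_lt.
  by exists (Sub (f v, v) Hv : U); rewrite // inE /=.
by move=> a b; rewrite !inE => /eqP fa /eqP fb H; apply: U_eq => //; rewrite -fa -fb H.
Qed.

Lemma sigma_inj f g : inR f -> inR g -> sigma f = sigma g -> f = g.
Proof.
move=> Rf Rg H; apply/ffunP => v.
case: (eqVneq (f v) v) => fv; case: (eqVneq (g v) v) => gv.
- by rewrite fv gv.
- have Hv : e (g v, v).1 (g v, v).2 && (rk (g v, v).1 < rk (g v, v).2).
    by rewrite /= inR_edge // rk_lt.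
  have : (Sub (g v, v) Hv : U) \in sigma g by rewrite inE.
  by rewrite -H inE /= => /eqP.
- have Hv : e (f v, v).1 (f v, v).2 && (rk (f v, v).1 < rk (f v, v).2).
    by rewrite /= inR_edge // rk_lt.
  have : (Sub (f v, v) Hv : U) \in sigma f by rewrite inE.
  by rewrite H inE /= => /eqP.
- have Hv : e (f v, v).1 (f v, v).2 && (rk (f v, v).1 < rk (f v, v).2).
    by rewrite /= inR_edge // rk_lt.
  have : (Sub (f v, v) Hv : U) \in sigma f by rewrite inE.
  by rewrite H inE /= => /eqP.
Qed.


Definition fS (S : {set U}) : {ffun T -> T} :=
  [ffun v => if [pick a in S | (val a).2 == v] is Some a then (val a).1 else v].

Lemma fSP S v : is_indep conf S ->
  (exists a, [/\ a \in S, (val a).2 = v & fS S v = (val a).1]) \/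
  (fS S v = v /\ forall a, a \in S -> (val a).2 != v).
Proof.
move=> iS; rewrite ffunE; case: pickP => [a /andP[aS /eqP a2] | H].
  by left; exists a; split.
by right; split => // a aS; move: (H a); rewrite aS /= => ->.
Qed.

Lemma fS_child S a : is_indep conf S -> a \in S -> fS S (val a).2 = (val a).1.
Proof.
move=> iS aS; case: (fSP (val a).2 iS) => [[b [bS b2 ->]] | [_ H]].
  case: (eqVneq b a) => [-> // | nba].
  by have := indepP iS bS aS; rewrite /conf nba b2 eqxx.
by move: (H a aS); rewrite eqxx.
Qed.

Lemma fS_R S : is_indep conf S -> inR (fS S).
Proof.
move=> iS; apply: inRI => [v | v | v w vw].
- case: (fSP v iS) => [[a [aS a2 fa]] | [fv _]]; last by rewrite !fv.
  rewrite fa; case: (fSP (val a).1 iS) => [[b [bS b2 _]] | [-> _] //].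
  have nab : a != b.
    by apply/eqP => ab; move: (U_neq a); rewrite -b2 ab eqxx.
  by have := indepP iS aS bS; rewrite /conf nab b2 eqxx !orbT.
- case: (fSP v iS) => [[a [aS a2 ->]] | [-> _] //].
  by rewrite -a2; exact: ltnW (U_lt a).
case: (fSP v iS) => [[a [aS a2 ->]] | [-> Hv]];
  case: (fSP w iS) => [[b [bS b2 ->]] | [-> Hw]].
- move=> ab.
  have nab : a != b by apply: contra vw => /eqP ab'; rewrite -a2 -b2 ab'.
  have := indepP iS aS bS; rewrite /conf nab ab eqxx /= -a2 -b2.
  by case: (e (val a).2 (val b).2); rewrite ?orbT.
- by move=> H; rewrite -a2 -H e_sym U_e.
- by move=> H; rewrite -b2 H U_e.
- by move=> H; rewrite H eqxx in vw.
Qed.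

Lemma sigma_fS S : is_indep conf S -> sigma (fS S) = S.
Proof.
move=> iS; apply/setP => a; rewrite inE; apply/eqP/idP => [| aS]; last first.
  exact: fS_child.
case: (fSP (val a).2 iS) => [[b [bS b2 ->]] H | [-> _] H].
  by have -> : a = b by apply: U_eq.
by move: (U_neq a); rewrite H eqxx.
Qed.


Lemma card_fS_img S : is_indep conf S -> #|S| + #|fS S @: [set: T]| = #|T|.
Proof. by move=> iS; rewrite -{1}(sigma_fS iS) card_sigma // fS_R. Qed.

Lemma a_i k : (0 < k)%N -> (k <= #|T|)%N ->
  clique_cover_num e k = indep_num conf (#|T| - k).
Proof.
move=> k0 kn; rewrite a_R /indep_num -(card_in_imset (f := sigma)); last first.
  by move=> f g; rewrite !inE => /andP[Rf _] /andP[Rg _]; apply: sigma_inj.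
apply: eq_card => S; rewrite [in RHS]inE; apply/imsetP/idP.
- case=> f; rewrite inE => /andP[Rf /eqP ck] ->.
  rewrite sigma_indep //=; have := card_sigma Rf; rewrite ck => H.
  by apply/eqP; rewrite -H addnK.
- case/andP => iS /eqP cS; exists (fS S); last by rewrite sigma_fS.
  rewrite inE fS_R //=; have := card_fS_img iS; rewrite cS => H.
  apply/eqP; lia.
Qed.

Lemma i_big j : (0 < #|T|)%N -> (#|T| <= j)%N -> indep_num conf j = 0%N.
Proof.
move=> /card_gt0P[x0 _] jn; apply/eqP; rewrite cards_eq0; apply/eqP/setP => S.
rewrite !inE; apply/negP => /andP[iS /eqP cS].
have := card_fS_img iS.
have : (0 < #|fS S @: [set: T]|)%N.
  by apply/card_gt0P; exists (fS S x0); apply: imset_f.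
lia.
Qed.

End Comb.

Lemma is_indepP (V : finType) (r : rel V) (A : {set V}) :
  reflect (forall x y, x \in A -> y \in A -> ~~ r x y) (is_indep r A).
Proof.
apply: (iffP forallP) => [H x y xA yA | H x].
  by move: (H x); rewrite xA /= => /forallP/(_ y); rewrite yA.
by apply/implyP => xA; apply/forallP => y; apply/implyP => yA; apply: H.
Qed.

Lemma indep_transport (V : finType) (r : rel V) j :
  indep_num (fun i k : 'I_#|V| => r (enum_val i) (enum_val k)) j = indep_num r j.
Proof.
rewrite /indep_num -(card_imset _ (imset_inj (@enum_val_inj V V))).
apply: eq_card => B; rewrite [in RHS]inE; apply/imsetP/idP.
- case=> A; rewrite inE => /andP[iA cA] ->.
  rewrite card_imset ?cA ?andbT; last exact: enum_val_inj.
  apply/is_indepP => _ _ /imsetP[x xA ->] /imsetP[y yA ->].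
  by move/is_indepP: iA; apply.
- case/andP => iB cB; exists (enum_rank @: B); last first.
    apply/setP => v; apply/idP/imsetP => [vB | [i /imsetP[w wB ->] ->]].
      by exists (enum_rank v); rewrite ?imset_f ?enum_rankK.
    by rewrite enum_rankK.
  rewrite inE card_imset ?cB ?andbT; last exact: enum_rank_inj.
  apply/is_indepP => _ _ /imsetP[x xB ->] /imsetP[y yB ->].
  by rewrite !enum_rankK; move/is_indepP: iB; apply.
Qed.

HB.instance Definition _ (T : finType) (e : rel T) :=
  Finite.copy (U e) {p : T * T | e p.1 p.2 && (rk p.1 < rk p.2)}.

Lemma transport_ex (V : finType) (r : rel V) : simple_graph r ->
  exists m (e' : rel 'I_m), simple_graph e' /\ forall j, indep_num e' j = indep_num r j.
Proof.
move=> [rs ri]; exists #|V|, (fun i k : 'I_#|V| => r (enum_val i) (enum_val k)).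
split; last by move=> j; apply: indep_transport.
by split; [move=> i k; apply: rs | move=> i; apply: ri].
Qed.

Local Open Scope ring_scope.

Lemma sum_trunc (d : nat -> rat) N1 N2 : (forall j, (N1 <= j)%N -> d j = 0) -> (N1 <= N2)%N ->
  \sum_(0 <= j < N2) d j = \sum_(0 <= j < N1) d j.
Proof.
move=> Hd H; rewrite (@big_cat_nat _ _ _ N1) //= [X in _ + X]big1_seq ?addr0 //.
by move=> j /andP[_]; rewrite mem_index_iota => /andP[Hj _]; exact: Hd.
Qed.

Unset Implicit Arguments.

Theorem theorem1 (T : finType) (e : rel T) :
  simple_graph e -> (0 < #|T|)%N ->
  exists (m : nat) (e' : rel 'I_m),
    simple_graph e' /\
    forall x : rat, x != 0 ->
      (adjoint_poly e).[x] = x ^+ #|T| * (indep_poly e').[x^-1].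
Proof.
move=> [es ei] n0.
have sgc : simple_graph (conf (e:=e)) by split; [apply: conf_sym | apply: conf_irr].
have [m [e' [sg He']]] := transport_ex sgc.
exists m, e'; split => // x x0.
rewrite /adjoint_poly /indep_poly !horner_sum card_ord.
under eq_bigr do rewrite hornerZ hornerXn.
under [in RHS]eq_bigr do rewrite hornerZ hornerXn.
set n := #|T|.
set d := fun j => (-1) ^+ j * (indep_num e' j)%:R * x^-1 ^+ j.
have Hm : forall j, (m < j)%N -> indep_num e' j = 0%N.
  move=> j mj; apply/eqP; rewrite cards_eq0; apply/eqP/setP => A.
  rewrite !inE; apply/negP => /andP[_ /eqP cA].
  by move: (max_card A); rewrite cA card_ord leqNgt mj.
rewrite -[\sum_(0 <= i < m.+1) _]/(\sum_(0 <= i < m.+1) d i).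
rewrite -(@sum_trunc d m.+1 (n + m.+1)); last 2 first.
- by move=> j Hj; rewrite /d Hm // (mulr0, mul0r) ?mulr0 ?mul0r.
- exact: leq_addl.
rewrite (@sum_trunc d n (n + m.+1)); last 2 first.
- by move=> j Hj; rewrite /d He' i_big // ?mulr0 ?mul0r.
- exact: leq_addr.
rewrite big_add1 /= mulr_sumr (big_nat_rev _ _ 0 n) /=.
apply: eq_big_nat => k /andP[_ kn].
rewrite add0n subnSK // /d He' a_i // ?subn_gt0 ?leq_subr // subKn ?(ltnW kn) //.
have -> : x ^+ n = x ^+ (n - k) * x ^+ k by rewrite -exprD subnK // ltnW.
rewrite exprVn -!mulrA [x ^+ k * _]mulrC -!mulrA mulVf ?expf_neq0 // mulr1.
by rewrite [RHS]mulrC mulrA.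
Qed.
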